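(* Let $q$ be a prime power and $1\le k\le n-1$. If $\mathcal{L}$ is a Cameron-Liebler $k$-set of $\mathrm{AG}(n,q)$ with parameter $x$, then $\mathcal{L}$, viewed as a set of $k$-spaces of the projective closure $\mathrm{PG}(n,q)$ of $\mathrm{AG}(n,q)$, is a Cameron-Liebler $k$-set of $\mathrm{PG}(n,q)$ with parameter $x$.
   Context: A $k$-space is a $k$-dimensional projective subspace. For integers $a,b\ge 0$, $\left[{a\atop b}\right]_q=\frac{(q^a-1)\cdots(q^{a-b+1}-1)}{(q^b-1)\cdots(q-1)}$ (and $0$ if $b>a$). The affine space $\mathrm{AG}(n,q)$ is $\mathrm{PG}(n,q)$ with a hyperplane $\pi_\infty$ (hyperplane at infinity) removed; affine points are points outside $\pi_\infty$, affine $k$-spaces are $k$-spaces of $\mathrm{PG}(n,q)$ not contained in $\pi_\infty$. Let $P_n$ be the point-($k$-space) incidence matrix of $\mathrm{PG}(n,q)$ and $A_n$ the incidence matrix of affine points versus affine $k$-spaces. A set $\mathcal{L}$ of $k$-spaces of $\mathrm{PG}(n,q)$ is a Cameron-Liebler $k$-set of $\mathrm{PG}(n,q)$ if its characteristic vector lies in the real row space $\mathrm{Im}(P_n^T)$, with parameter $|\mathcal{L}|/\left[{n\atop k}\right]_q$. A set of affine $k$-spaces is a Cameron-Liebler $k$-set of $\mathrm{AG}(n,q)$ if its characteristic vector lies in $\mathrm{Im}(A_n^T)$, with parameter $|\mathcal{L}|/\left[{n\atop k}\right]_q$. *)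

(* Defs.v *)
(* Projective geometry PG(n,q) modelled inside the row space
   'rV[F]_(n.+1) of a finite field F with #|F| = q.  A projective d-space is a
   (d+1)-dimensional vector subspace, represented canonically by the square
   matrix A with <<A>>%MS = A (the canonical generator of its row space). *)
From HB Require Import structures.
From mathcomp Require Import all_boot all_order all_algebra.
From mathcomp Require Import reals.
Unset Printing Implicit Defensive.
Import Order.TTheory GRing.Theory Num.Theory.
Local Open Scope ring_scope.

Definition vsubsp (F : finFieldType) (n d : nat) : {set 'M[F]_(n.+1)} :=
  [set A : 'M[F]_(n.+1) | (<<A>>%MS == A) && (\rank A == d)%N].

Definition pg_points (F : finFieldType) (n : nat) := vsubsp F n 1.
Definition pg_kspaces (F : finFieldType) (n k : nat) := vsubsp F n k.+1.
Definition pg_hyperplanes (F : finFieldType) (n : nat) := vsubsp F n n.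

Definition incident (F : finFieldType) (n : nat) (A B : 'M[F]_(n.+1)) : bool :=
  (A <= B)%MS.

(* affine objects w.r.t. the hyperplane at infinity H: not contained in H *)
Definition ag_points (F : finFieldType) (n : nat) (H : 'M[F]_(n.+1)) :=
  [set P in pg_points F n | ~~ incident F n P H].
Definition ag_kspaces (F : finFieldType) (n k : nat) (H : 'M[F]_(n.+1)) :=
  [set K in pg_kspaces F n k | ~~ incident F n K H].

Definition gauss_binom (R : realFieldType) (q a b : nat) : R :=
  if (b <= a)%N then
    (\prod_(i < b) ((q ^ (a - i))%:R - 1)) / (\prod_(i < b) ((q ^ i.+1)%:R - 1))
  else 0.

(* char. vector of L lies in Im(P_n^T): there is a real vector v indexed by
   points with (P_n^T v)_K = chi_L(K) for every k-space K. *)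
Definition CL_PG (R : realType) (F : finFieldType) (n k : nat)
    (L : {set 'M[F]_(n.+1)}) : Prop :=
  L \subset pg_kspaces F n k /\
  exists v : 'M[F]_(n.+1) -> R,
    forall K, K \in pg_kspaces F n k ->
      ((K \in L)%:R : R) = \sum_(P in pg_points F n | incident F n P K) v P.

Definition CL_PG_param (R : realType) (F : finFieldType) (n k : nat)
    (L : {set 'M[F]_(n.+1)}) (x : R) : Prop :=
  @CL_PG R F n k L /\ x = #|L|%:R / gauss_binom R #|F| n k.

(* char. vector of L (indexed by affine k-spaces) lies in Im(A_n^T). *)
Definition CL_AG (R : realType) (F : finFieldType) (n k : nat)
    (H : 'M[F]_(n.+1)) (L : {set 'M[F]_(n.+1)}) : Prop :=
  L \subset ag_kspaces F n k H /\
  exists v : 'M[F]_(n.+1) -> R,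
    forall K, K \in ag_kspaces F n k H ->
      ((K \in L)%:R : R) = \sum_(P in ag_points F n H | incident F n P K) v P.

Definition CL_AG_param (R : realType) (F : finFieldType) (n k : nat)
    (H : 'M[F]_(n.+1)) (L : {set 'M[F]_(n.+1)}) (x : R) : Prop :=
  @CL_AG R F n k H L /\ x = #|L|%:R / gauss_binom R #|F| n k.

(* Main.v *)
Require Import Defs.
From HB Require Import structures.
From mathcomp Require Import all_boot all_order all_algebra.
From mathcomp Require Import reals.
Import GRing.Theory.
Local Open Scope ring_scope.

Theorem theorem1p2 (R : realType) (F : finFieldType) (q n k : nat)
    (H : 'M[F]_(n.+1)) (L : {set 'M[F]_(n.+1)}) (x : R) :
  q = #|F| ->
  (1 <= k <= n - 1)%N ->
  H \in pg_hyperplanes F n ->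
  @CL_AG_param R F n k H L x ->
  @CL_PG_param R F n k L x.
Proof.
move=> _ _ _ [[sub [v hv]] hx]; split=> //; split.
  apply/subsetP=> K /(subsetP sub); rewrite inE; by case/andP.
exists (fun P => if incident F n P H then 0 else v P) => K hK.
case hKH: (incident F n K H).
  have -> : (K \in L) = false.
    apply/negbTE/negP=> /(subsetP sub); by rewrite inE hKH andbF.
  rewrite big1 // => P /andP [_ hPK].
  by rewrite /incident (submx_trans hPK hKH).
have hK' : K \in ag_kspaces F n k H by rewrite inE hK hKH.
rewrite (hv K hK').
under [RHS]eq_bigr => P _ do rewrite -if_neg.
rewrite -big_mkcondr /=.
apply: eq_bigl => P; rewrite inE.
by case: (P \in pg_points F n); case: (incident F n P K); case: (incident F n P H).
Qed.
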